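(* Let $R$ be a ring, $n\ge1$ and $\frac{A}{B}\in\mathcal{F}_n(R)$. There exists a unique pair $(U_1,V_1)$ of polynomials in $R[X]$ with $\deg U_1=n-1$, $\deg V_1\le n-1$ and $AU_1+BV_1=X^{2n-1}$. Let $\phi_n(\frac{A}{B})$ be the opposite of the coefficient of $X^{n-1}$ in $V_1$. Then the resulting scheme morphism $\phi_n:\mathcal{F}_n\to\mathbf{A}^1$ is $\mathbf{G}_a$-equivariant; in particular $\mathcal{F}_n\simeq\phi_n^{-1}(0)\times\mathbf{A}^1$.
   Context: For a ring $R$ and $n\ge1$, $\mathcal{F}_n(R)$ is the set of pairs $(A,B)$, written $\frac{A}{B}$, of polynomials in $R[X]$ with $A$ monic of degree $n$, $\deg B<n$ and $\mathrm{res}_{n,n}(A,B)\in R^\times$; $\mathcal{F}_n$ is the representing scheme (an open subscheme of $\mathbf{A}^{2n}$ over a base field $k$). The additive group $\mathbf{G}_a$ acts on $\mathcal{F}_n$ by $h\cdot\frac{A}{B}=\frac{A+hB}{B}$ and on $\mathbf{A}^1$ by translation. *)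

(* Defs.v *)
From HB Require Import structures.
From mathcomp Require Import all_boot all_order all_algebra.
Set Implicit Arguments. Unset Strict Implicit. Unset Printing Implicit Defensive.
Import Order.TTheory GRing.Theory.
Local Open Scope ring_scope.

(* Sylvester matrix S_{n,n}(A,B): the matrix (in the monomial bases) of the
   R-linear map (U,V) |-> A*U + B*V, deg U < n, deg V < n, into polynomials
   of degree < 2n.  Row i < n is X^i * A, row n + i is X^i * B;
   column j is the coefficient of X^j.  res_{n,n}(A,B) is its determinant
   (up to a sign convention, irrelevant for being a unit). *)
Definition sylv_nn (R : comUnitRingType) (n : nat) (A B : {poly R})
  : 'M[R]_(n + n) :=
  \matrix_(i < n + n, j < n + n)
    (if (i < n)%N then ('X^i * A)`_j else ('X^(i - n) * B)`_j).

Definition res_nn (R : comUnitRingType) (n : nat) (A B : {poly R}) : R :=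
  \det (sylv_nn n A B).

Definition inF (R : comUnitRingType) (n : nat) (A B : {poly R}) : bool :=
  [&& A \is monic, size A == n.+1, (size B <= n)%N
    & res_nn n A B \is a GRing.unit].

Definition bezout_sol (R : comUnitRingType) (n : nat) (A B U V : {poly R})
  : Prop :=
  [/\ size U = n, (size V <= n)%N & A * U + B * V = 'X^(2 * n - 1)].

Definition is_phi (R : comUnitRingType) (n : nat) (A B : {poly R}) (c : R)
  : Prop :=
  exists U V, bezout_sol n A B U V /\ c = - V`_(n.-1).

(* Main.v *)
Require Import Defs.
From HB Require Import structures.
From mathcomp Require Import all_boot all_order all_algebra zify.
Import GRing.Theory.
Local Open Scope ring_scope.
Module Aux.
Set Implicit Arguments. Unset Strict Implicit.
Section Aux.
Variable R : comUnitRingType.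

Definition sp (n : nat) (c : 'I_n -> R) : {poly R} := \sum_(i < n) c i *: 'X^i.

Lemma coef_sp n c k : (@sp n c)`_k = \sum_(i < n) c i * (k == i)%:R.
Proof. rewrite /sp coef_sum; apply: eq_bigr => i _; by rewrite coefZ coefXn. Qed.

Lemma coef_sp_lt n c k (hk : (k < n)%N) : (@sp n c)`_k = c (Ordinal hk).
Proof.
rewrite coef_sp (bigD1 (Ordinal hk)) //= eqxx mulr1 big1 ?addr0 // => i hi.
case: eqP => [e|]; last by rewrite mulr0.
by case/eqP: hi; apply: val_inj; rewrite /= e.
Qed.

Lemma coef_sp_ge n c k : (n <= k)%N -> (@sp n c)`_k = 0.
Proof.
move=> hk; rewrite coef_sp big1 // => i _.
have -> : (k == i) = false.
  by apply/negbTE; rewrite neq_ltn (leq_trans (ltn_ord i) hk) orbT.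
by rewrite mulr0.
Qed.

Lemma size_sp n c : (size (@sp n c) <= n)%N.
Proof. by apply/leq_sizeP => k hk; rewrite coef_sp_ge. Qed.

Lemma sp_eq n c (p : {poly R}) : (size p <= n)%N ->
  (forall i : 'I_n, c i = p`_i) -> @sp n c = p.
Proof.
move=> hp hc; apply/polyP => k; case: (ltnP k n) => hk.
  by rewrite coef_sp_lt hc.
move/leq_sizeP: hp => hp.
by rewrite coef_sp_ge // hp.
Qed.

Lemma coef_AU n (A U : {poly R}) : (1 <= n)%N -> A \is monic -> size A = n.+1 ->
  (size U <= n)%N -> (A * U)`_(2 * n - 1) = U`_n.-1.
Proof.
move=> hn mA sA sU.
have [U0|nzU] := eqVneq U 0; first by rewrite U0 mulr0 !coef0.
case: (ltnP (size U) n) => hU.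
  rewrite nth_default; last first.
    apply: leq_trans (size_polyMleq _ _) _; rewrite sA; lia.
  by rewrite nth_default // -ltnS prednK.
have eU : size U = n by apply/eqP; rewrite eqn_leq sU hU.
have := lead_coef_monicM U mA.
rewrite /lead_coef size_monicM // sA eU.
by have -> : (2 * n - 1 = (n.+1 + n).-1.-1)%N by lia.
Qed.

Lemma coef_BV n (B V : {poly R}) : (size B <= n)%N -> (size V <= n)%N ->
  (B * V)`_(2 * n - 1) = 0.
Proof.
move=> sB sV; rewrite nth_default //.
apply: leq_trans (size_polyMleq _ _) _; lia.
Qed.
End Aux.
Section Aux2.
Variable R : comUnitRingType.

Definition Tm n (P : {poly R}) : 'M[R]_(n, n + n) :=
  \matrix_(i < n, j < n + n) ('X^i * P)`_j.

Lemma sylv_col n (A B : {poly R}) : sylv_nn n A B = col_mx (Tm n A) (Tm n B).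
Proof.
apply/matrixP => i j; rewrite !mxE; case: splitP => k hk; rewrite hk mxE.
  by [].
by rewrite ?ltnNge ?leq_addr /= ?addKn.
Qed.

Lemma sylv_shift n (A B : {poly R}) h : sylv_nn n (A + h *: B) B =
  block_mx 1%:M h%:M 0 1%:M *m sylv_nn n A B.
Proof.
rewrite !sylv_col mul_block_col !mul1mx mul0mx add0r mul_scalar_mx.
congr col_mx; apply/matrixP => i j; rewrite !mxE.
by rewrite mulrDr coefD -scalerAr coefZ.
Qed.

Lemma res_shift n (A B : {poly R}) h : res_nn n (A + h *: B) B = res_nn n A B.
Proof. by rewrite /res_nn sylv_shift det_mulmx det_ublock !det1 !mul1r. Qed.

Lemma key n (A B : {poly R}) (u : 'rV[R]_(n + n)) (j : 'I_(n + n)) :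
  (A * sp (fun i => u 0 (lshift n i)) + B * sp (fun i => u 0 (rshift n i)))`_j
  = (u *m sylv_nn n A B) 0 j.
Proof.
rewrite mxE big_split_ord /= coefD /sp !mulr_sumr !coef_sum.
congr (_ + _); apply: eq_bigr => i _; rewrite mxE /=.
  by case: ifP => [_|]; [rewrite -scalerAr coefZ [A * _]mulrC | rewrite ltn_ord].
by case: ifP => [|_]; [rewrite ltnNge leq_addr | rewrite addKn -scalerAr coefZ [B * _]mulrC].
Qed.
End Aux2.
Section Main.
Variable R : comUnitRingType.

Lemma exist_uniq n (hn : (1 <= n)%N) (A B : {poly R}) : inF n A B ->
  exists! UV : {poly R} * {poly R}, bezout_sol n A B UV.1 UV.2.
Proof.
case/and4P => mA /eqP sA sB uS.
have uM : sylv_nn n A B \in unitmx by rewrite unitmxE.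
pose t : 'rV[R]_(n + n) := \row_j (((j : nat) == (2 * n - 1)%N)%:R).
pose u := t *m invmx (sylv_nn n A B).
have hu : u *m sylv_nn n A B = t by rewrite /u mulmxKV.
pose U := sp (fun i => u 0 (lshift n i)).
pose V := sp (fun i => u 0 (rshift n i)).
have sU : (size U <= n)%N by apply: size_sp.
have sV : (size V <= n)%N by apply: size_sp.
have e : A * U + B * V = 'X^(2 * n - 1).
  apply/polyP => k; case: (ltnP k (n + n)) => hk.
    have := key A B u (Ordinal hk); rewrite hu !mxE /= => ->.
    by rewrite coefXn.
  rewrite coefD coefXn !nth_default.
  - have -> : (k == (2 * n - 1)%N) = false by apply/negbTE; lia.
    by rewrite addr0.
  - by apply: leq_trans (size_polyMleq _ _) _; lia.
  - by apply: leq_trans (size_polyMleq _ _) _; rewrite sA; lia.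
have U1 : U`_n.-1 = 1.
  have := congr1 (fun p : {poly R} => p`_(2 * n - 1)) e.
  by rewrite /= coefD coef_AU // coef_BV // addr0 coefXn eqxx.
have sU' : size U = n.
  apply/eqP; rewrite eqn_leq sU /= leqNgt; apply/negP => hlt.
  have h0 : U`_n.-1 = 0 by rewrite nth_default // -ltnS prednK.
  by move: U1; rewrite h0 => /eqP; rewrite eq_sym oner_eq0.
exists (U, V); split; first by split.
move=> [U' V'] [/= sU2 sV2 e2].
pose w : 'rV[R]_(n + n) :=
  \row_k (if ((k : nat) < n)%N then U'`_k else V'`_(k - n)).
have hU' : sp (fun i => w 0 (lshift n i)) = U'.
  by apply: sp_eq; [rewrite sU2 | move=> i; rewrite mxE /= ltn_ord].
have hV' : sp (fun i => w 0 (rshift n i)) = V'.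
  apply: sp_eq => // i; rewrite mxE /=.
  by case: ifP => [|_]; [rewrite ltnNge leq_addr | rewrite addKn].
have hw : w *m sylv_nn n A B = t.
  apply/matrixP => i j; rewrite (ord1 i) -key hU' hV' e2 !mxE coefXn.
  by [].
have wu : w = u by rewrite /u -hw mulmxK.
by rewrite -hU' -hV' wu.
Qed.

Lemma coefU1 n (hn : (1 <= n)%N) (A B U V : {poly R}) : inF n A B ->
  bezout_sol n A B U V -> U`_n.-1 = 1.
Proof.
case/and4P => mA /eqP sA sB uS [sU sV e].
have := congr1 (fun p : {poly R} => p`_(2 * n - 1)) e.
by rewrite /= coefD coef_AU ?sU // coef_BV // addr0 coefXn eqxx.
Qed.

Lemma inF_shift n (A B : {poly R}) h : inF n A B -> inF n (A + h *: B) B.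
Proof.
case/and4P => mA /eqP sA sB uS.
have hs : (size (h *: B) < size A)%N.
  by rewrite sA ltnS (leq_trans (size_scale_leq _ _)).
apply/and4P; split => //.
- by rewrite monicE lead_coefDl // -monicE.
- by rewrite size_polyDl // sA.
- by rewrite res_shift.
Qed.

Lemma phi_shift n (hn : (1 <= n)%N) (A B : {poly R}) h c : inF n A B ->
  is_phi n A B c -> is_phi n (A + h *: B) B (c + h).
Proof.
move=> hF [U [V [b ->]]].
have U1 := coefU1 hn hF b.
case: b => sU sV e.
exists U, (V - h *: U); split; first split => //.
- apply: leq_trans (size_polyD _ _) _.
  by rewrite geq_max sV size_polyN (leq_trans (size_scale_leq _ _)) ?sU.
- rewrite -e mulrDl mulrBr -scalerAl -scalerAr addrACA subrr addr0.
  by [].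
- by rewrite coefB coefZ U1 mulr1 opprB addrC.
Qed.

Lemma phi_uniq n (hn : (1 <= n)%N) (A B : {poly R}) c1 c2 : inF n A B ->
  is_phi n A B c1 -> is_phi n A B c2 -> c1 = c2.
Proof.
move=> hF [U1 [V1 [b1 ->]]] [U2 [V2 [b2 ->]]].
have [x [_ hx]] := exist_uniq hn hF.
have := hx (U1, V1) b1; have := hx (U2, V2) b2.
by move=> e2; rewrite e2 => -[_ ->].
Qed.
End Main.
End Aux.
Import Aux.
Theorem lemma3p18 (R : comUnitRingType) (n : nat) (hn : (1 <= n)%N) :
  (* existence and uniqueness of (U1,V1) *)
  (forall A B : {poly R}, inF n A B ->
     exists! UV : {poly R} * {poly R}, bezout_sol n A B UV.1 UV.2) /\
  (* G_a-equivariance: h.(A/B) = (A + hB)/B stays in F_n and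
     phi_n((A + hB)/B) = phi_n(A/B) + h *)
  (forall (A B : {poly R}) (h c : R), inF n A B -> is_phi n A B c ->
     inF n (A + h *: B) B /\ is_phi n (A + h *: B) B (c + h)) /\
  (* F_n ~ phi_n^{-1}(0) x A^1 via ((A0/B0), h) |-> (A0 + h B0)/B0 *)
  (forall (A0 B0 : {poly R}) (h : R), inF n A0 B0 -> is_phi n A0 B0 0 ->
     inF n (A0 + h *: B0) B0) /\
  (forall A B : {poly R}, inF n A B ->
     exists! ABh : ({poly R} * {poly R}) * R,
       [/\ inF n ABh.1.1 ABh.1.2, is_phi n ABh.1.1 ABh.1.2 0,
           A = ABh.1.1 + ABh.2 *: ABh.1.2 & B = ABh.1.2]).
Proof.
split; first exact: exist_uniq.
split; first by move=> A B h c hF hp; split; [apply: inF_shift | apply: phi_shift].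
split; first by move=> A0 B0 h hF _; apply: inF_shift.
move=> A B hF.
have [[U V] [b _]] := exist_uniq hn hF.
pose c := - V`_n.-1.
have pc : is_phi n A B c by exists U, V.
exists ((A + (- c) *: B, B), c); split.
  split => //=.
  - exact: inF_shift.
  - by have := phi_shift hn (-c) hF pc; rewrite subrr.
  - by rewrite -addrA -scalerDl addNr scale0r addr0.
move=> [[A0 B0] h] /= [hF0 p0 eA eB]; subst B0.
have ph : is_phi n A B (0 + h) by rewrite eA; apply: phi_shift.
rewrite add0r in ph.
have ch := phi_uniq hn hF pc ph.
by rewrite eA ch -addrA -scalerDl subrr scale0r addr0.
Qed.
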